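(* Let $n\ge1$ and $\mathbf{P}_A,\mathbf{P}_B,\mathbf{Q}_A,\mathbf{Q}_B\in\mathbb{R}^{n\times n}$ be symmetric positive definite; $\mathbf{C}_A=\mathbf{P}_A+\mathbf{Q}_A$, $\mathbf{C}_B=\mathbf{P}_B+\mathbf{Q}_B$. Let $\mathbf{K}=(\mathbf{K}_A,\mathbf{K}_B)$ satisfy $\mathbf{K}_A+\mathbf{K}_B=\mathbf{I}$ and let $\mathbf{B}_F$ be a symmetric positive definite matrix such that $\mathbf{B}_F\succeq\mathbf{C}_F(\mathbf{K},\mathbf{P}_{AB})$ for all $\mathbf{P}_{AB}\in\mathcal{A}_{\mathrm{Split}}$. Then $\mathcal{V}^*\subseteq\mathcal{E}(\mathbf{B}_F)$.
   Context: $\mathcal{A}_{\mathrm{Split}}=\{\mathbf{M}\in\mathbb{R}^{n\times n} : \begin{bmatrix}\mathbf{P}_A & \mathbf{M}\\ \mathbf{M}^\intercal & \mathbf{P}_B\end{bmatrix}\succeq 0\}$. $\mathbf{C}_F(\mathbf{K},\mathbf{P}_{AB})=\mathbf{K}_A\mathbf{C}_A\mathbf{K}_A^\intercal+\mathbf{K}_A\mathbf{P}_{AB}\mathbf{K}_B^\intercal+\mathbf{K}_B\mathbf{P}_{AB}^\intercal\mathbf{K}_A^\intercal+\mathbf{K}_B\mathbf{C}_B\mathbf{K}_B^\intercal$. For $\mathbf{P}_{AB}\in\mathcal{A}_{\mathrm{Split}}$ let $\mathbf{R}=\mathbf{C}_A+\mathbf{C}_B-\mathbf{P}_{AB}-\mathbf{P}_{AB}^\intercal$,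 $\mathbf{K}_A^*=(\mathbf{C}_B-\mathbf{P}_{AB}^\intercal)\mathbf{R}^{-1}$, $\mathbf{K}^*=(\mathbf{K}_A^*,\mathbf{I}-\mathbf{K}_A^* )$ and $\mathbf{C}_F^*(\mathbf{P}_{AB})=\mathbf{C}_F(\mathbf{K}^*,\mathbf{P}_{AB})$. For a symmetric positive definite $\mathbf{P}$, $\mathcal{E}(\mathbf{P})=\{\mathbf{x}\in\mathbb{R}^n:\mathbf{x}^\intercal\mathbf{P}^{-1}\mathbf{x}\le1\}$. Define $\mathcal{V}^*=\bigcup_{\mathbf{P}_{AB}\in\mathcal{A}_{\mathrm{Split}}}\mathcal{E}(\mathbf{C}_F^*(\mathbf{P}_{AB}))$. *)

(* Defs.v *)
From HB Require Import structures.
From mathcomp Require Import all_boot all_order all_algebra.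
Set Implicit Arguments. Unset Strict Implicit. Unset Printing Implicit Defensive.
Import Order.TTheory GRing.Theory Num.Theory.
Local Open Scope ring_scope.

Section Defs.
Variable R : realFieldType.

Definition psd (m : nat) (A : 'M[R]_m) : Prop :=
  A^T = A /\ forall x : 'cV[R]_m, 0 <= (x^T *m A *m x) 0 0.

Definition spd (m : nat) (A : 'M[R]_m) : Prop :=
  A^T = A /\ forall x : 'cV[R]_m, x != 0 -> 0 < (x^T *m A *m x) 0 0.

Definition loewner_ge (m : nat) (A B : 'M[R]_m) : Prop := psd (A - B).

Definition in_ASplit (n : nat) (PA PB M : 'M[R]_n) : Prop :=
  psd (block_mx PA M M^T PB).

Definition CF (n : nat) (KA KB CA CB PAB : 'M[R]_n) : 'M[R]_n :=
  KA *m CA *m KA^T + KA *m PAB *m KB^T + KB *m PAB^T *m KA^T + KB *m CB *m KB^T.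

Definition Rmat (n : nat) (CA CB PAB : 'M[R]_n) : 'M[R]_n :=
  CA + CB - PAB - PAB^T.

Definition KAstar (n : nat) (CA CB PAB : 'M[R]_n) : 'M[R]_n :=
  (CB - PAB^T) *m invmx (Rmat CA CB PAB).

Definition CFstar (n : nat) (CA CB PAB : 'M[R]_n) : 'M[R]_n :=
  CF (KAstar CA CB PAB) (1%:M - KAstar CA CB PAB) CA CB PAB.

Definition in_ellipsoid (n : nat) (P : 'M[R]_n) (x : 'cV[R]_n) : Prop :=
  (x^T *m invmx P *m x) 0 0 <= 1.

Definition in_Vstar (n : nat) (PA PB CA CB : 'M[R]_n) (x : 'cV[R]_n) : Prop :=
  exists PAB : 'M[R]_n, in_ASplit PA PB PAB /\ in_ellipsoid (CFstar CA CB PAB) x.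

End Defs.

(* Main.v *)
Require Import Defs.
From mathcomp Require Import all_boot all_order all_algebra.
From mathcomp Require Import lra.
Set Implicit Arguments. Unset Strict Implicit. Unset Printing Implicit Defensive.
Import Order.TTheory GRing.Theory Num.Theory.
Local Open Scope ring_scope.

Section H.
Variable R : realFieldType.
Variable n : nat.
Implicit Types (A B : 'M[R]_n) (u v w : 'cV[R]_n).

Definition bf u A v : R := (u^T *m A *m v) 0 0.
Definition dt u v : R := (u^T *m v) 0 0.

Lemma e11D (X Y : 'M[R]_1) : (X + Y) 0 0 = X 0 0 + Y 0 0.
Proof. by rewrite !mxE. Qed.
Lemma e11B (X Y : 'M[R]_1) : (X - Y) 0 0 = X 0 0 - Y 0 0.
Proof. by rewrite !mxE. Qed.
Lemma e11T (X : 'M[R]_1) : X^T 0 0 = X 0 0.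
Proof. by rewrite !mxE. Qed.

Lemma bAD u A B v : bf u (A + B) v = bf u A v + bf u B v.
Proof. by rewrite /bf mulmxDr mulmxDl e11D. Qed.
Lemma bAB u A B v : bf u (A - B) v = bf u A v - bf u B v.
Proof. by rewrite /bf mulmxBr mulmxBl e11B. Qed.
Lemma bDl u u' A v : bf (u + u') A v = bf u A v + bf u' A v.
Proof. by rewrite /bf linearD /= !mulmxDl e11D. Qed.
Lemma bBl u u' A v : bf (u - u') A v = bf u A v - bf u' A v.
Proof. by rewrite /bf linearB /= !mulmxBl e11B. Qed.
Lemma bDr u A v v' : bf u A (v + v') = bf u A v + bf u A v'.
Proof. by rewrite /bf mulmxDr e11D. Qed.
Lemma bBr u A v v' : bf u A (v - v') = bf u A v - bf u A v'.
Proof. by rewrite /bf mulmxBr e11B. Qed.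
Lemma bT u A v : bf u A v = bf v A^T u.
Proof. by rewrite /bf -e11T !trmx_mul trmxK mulmxA. Qed.
Lemma dtC u v : dt u v = dt v u.
Proof. by rewrite /dt -e11T trmx_mul trmxK. Qed.
Lemma bdt u A v : bf u A v = dt u (A *m v).
Proof. by rewrite /bf /dt mulmxA. Qed.
Lemma bmul u (K L A : 'M[R]_n) v : bf u (K *m A *m L) v = bf (K^T *m u) A (L *m v).
Proof. by rewrite /bf trmx_mul trmxK !mulmxA. Qed.
Lemma bN u A v : bf (- u) A v = - bf u A v.
Proof. by rewrite -[-u]sub0r bBl {1}/bf trmx0 !mul0mx mxE sub0r. Qed.
Lemma bNr u A v : bf u A (- v) = - bf u A v.
Proof. by rewrite -[-v]sub0r bBr {1}/bf !mulmx0 mxE sub0r. Qed.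

(* completing the square *)
Lemma CS A v w a : A^T = A -> (forall u, 0 <= bf u A u) -> A *m w = v ->
  bf w A w - 2 * dt w v <= bf a A a - 2 * dt a v.
Proof.
move=> hs hp hw.
have h := hp (a - w).
rewrite !bBl !bBr in h.
have e1 : bf a A w = dt a v by rewrite bdt hw.
have e2 : bf w A a = dt a v by rewrite bT hs e1.
have e3 : bf w A w = dt w v by rewrite bdt hw.
rewrite e1 e2 e3 in h; rewrite e3.
lra.
Qed.

Lemma blockq (A B C D : 'M[R]_n) a c :
  ((col_mx a c)^T *m block_mx A B C D *m col_mx a c) 0 0
  = bf a A a + bf a B c + bf c C a + bf c D c.
Proof.
rewrite tr_col_mx mul_row_block mul_row_col !mulmxDl !e11D /bf.
rewrite -!addrA; congr (_ + _); rewrite addrC -!addrA; congr (_ + _); by rewrite addrC.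
Qed.

Lemma spd_unit A : spd A -> A \in unitmx.
Proof.
move=> [_ hp]; rewrite unitmxE unitfE; apply/negP => /det0P [v v0 hv].
have hv0 : v^T != 0 by rewrite trmx_eq0.
have := hp _ hv0; rewrite trmxK hv mul0mx mxE ltxx //.
Qed.

Lemma qCF0 (K CA CB P : 'M[R]_n) z :
  bf z (CF K (1%:M - K) CA CB P) z =
  bf (K^T *m z) CA (K^T *m z) + bf (K^T *m z) P (z - K^T *m z)
  + bf (z - K^T *m z) P^T (K^T *m z) + bf (z - K^T *m z) CB (z - K^T *m z).
Proof.
by rewrite /CF !bAD !bmul linearB /= trmx1 mulmxBl mul1mx.
Qed.

Lemma qCF (K CA CB P : 'M[R]_n) z : CB^T = CB ->
  bf z (CF K (1%:M - K) CA CB P) z =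
  bf (K^T *m z) (Rmat CA CB P) (K^T *m z) - 2 * dt (K^T *m z) ((CB - P) *m z)
  + bf z CB z.
Proof.
move=> hB; rewrite qCF0; set a := K^T *m z.
rewrite /Rmat !bAB !bAD -bdt !bAB !bBl !bBr.
have e1 : bf z P^T a = bf a P z by rewrite bT trmxK.
have e2 : bf z CB a = bf a CB z by rewrite bT hB.
rewrite e1 e2; lra.
Qed.

Lemma CFsym (K L CA CB P : 'M[R]_n) : CA^T = CA -> CB^T = CB ->
  (CF K L CA CB P)^T = CF K L CA CB P.
Proof.
move=> hA hB; rewrite /CF !linearD /= !trmx_mul !trmxK hA hB !mulmxA.
rewrite -!addrA; congr (_ + _); rewrite !addrA; congr (_ + _); by rewrite addrC.
Qed.

Lemma bf0 A v : bf 0 A v = 0.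
Proof. by rewrite /bf trmx0 !mul0mx mxE. Qed.

Lemma spd_ge0 A u : spd A -> 0 <= bf u A u.
Proof.
move=> [_ hp]; have [->|u0] := eqVneq u 0; first by rewrite bf0.
exact/ltW/hp.
Qed.

Lemma spd_sym A : spd A -> A^T = A.
Proof. by case. Qed.

Lemma spdCF (PA PB QA QB P K : 'M[R]_n) :
  spd PA -> spd PB -> spd QA -> spd QB -> in_ASplit PA PB P ->
  spd (CF K (1%:M - K) (PA + QA) (PB + QB) P).
Proof.
move=> hPA hPB hQA hQB [_ hb]; split.
  by apply: CFsym; rewrite linearD /= !spd_sym.
move=> z z0; change (0 < bf z (CF K (1%:M - K) (PA + QA) (PB + QB) P) z); rewrite qCF0; set a := K^T *m z; set c := z - a.
have := hb (col_mx a c); rewrite blockq => h.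
rewrite !bAD.
have ha := spd_ge0 a hQA; have hc := spd_ge0 c hQB.
have [a0|a0] := eqVneq a 0.
  have c0 : c != 0 by rewrite /c a0 subr0.
  have hc' : 0 < bf c QB c := (proj2 hQB) _ c0; lra.
have ha' : 0 < bf a QA a := (proj2 hQA) _ a0; lra.
Qed.

Lemma spdR (PA PB QA QB P : 'M[R]_n) :
  spd PA -> spd PB -> spd QA -> spd QB -> in_ASplit PA PB P ->
  spd (Rmat (PA + QA) (PB + QB) P).
Proof.
move=> hPA hPB hQA hQB [_ hb]; split.
  rewrite /Rmat !linearB !linearD /= trmxK (spd_sym hPA) (spd_sym hQA) (spd_sym hPB) (spd_sym hQB).
  by rewrite addrAC.
move=> z z0; change (0 < bf z (Rmat (PA + QA) (PB + QB) P) z); have := hb (col_mx z (-z)); rewrite blockq => h.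
rewrite /Rmat !bAB !bAD.
rewrite !bN !bNr opprK in h.
have := spd_ge0 z hQB; have ha' : 0 < bf z QA z := (proj2 hQA) _ z0; lra.
Qed.

Lemma CFge (PA PB QA QB P K : 'M[R]_n) z :
  spd PA -> spd PB -> spd QA -> spd QB -> in_ASplit PA PB P ->
  bf z (CFstar (PA + QA) (PB + QB) P) z <= bf z (CF K (1%:M - K) (PA + QA) (PB + QB) P) z.
Proof.
move=> hPA hPB hQA hQB hAS.
have hR := spdR hPA hPB hQA hQB hAS.
have hCB : (PB + QB)^T = PB + QB by rewrite linearD /= !spd_sym.
rewrite /CFstar !qCF //.
set Rm := Rmat _ _ _.
have := @CS Rm ((PB + QB - P) *m z) ((KAstar (PA + QA) (PB + QB) P)^T *m z) (K^T *m z)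
  (spd_sym hR) (fun u => spd_ge0 u hR).
have hw : Rm *m ((KAstar (PA + QA) (PB + QB) P)^T *m z) = (PB + QB - P) *m z.
  rewrite /KAstar trmx_mul trmx_inv (spd_sym hR) linearB /= trmxK hCB !mulmxA.
  by rewrite mulmxV ?mul1mx //; apply: spd_unit.
move=> /(_ hw); lra.
Qed.
End H.

Theorem lemma2 (R : realFieldType) (n : nat) (hn : (0 < n)%N)
  (PA PB QA QB KA KB BF : 'M[R]_n) :
  spd PA -> spd PB -> spd QA -> spd QB ->
  KA + KB = 1%:M ->
  spd BF ->
  (forall PAB : 'M[R]_n, in_ASplit PA PB PAB ->
     loewner_ge BF (CF KA KB (PA + QA) (PB + QB) PAB)) ->
  forall x : 'cV[R]_n,
    in_Vstar PA PB (PA + QA) (PB + QB) x -> in_ellipsoid BF x.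
Proof.
move=> hPA hPB hQA hQB hK hBF hall x [P [hAS hE]].
have hKB : KB = 1%:M - KA by rewrite -hK addrAC subrr add0r.
have [_ hL] := hall P hAS; rewrite hKB in hL.
have hCs : spd (CFstar (PA + QA) (PB + QB) P) by apply: spdCF.
set Cs := CFstar _ _ _ in hCs hE.
set y := invmx BF *m x.
have hy : BF *m y = x by rewrite /y mulKVmx //; apply: spd_unit.
change (bf x (invmx BF) x <= 1).
have hE' : bf x (invmx Cs) x <= 1 := hE.
have e1 : bf x (invmx BF) x = dt y x by rewrite bdt dtC.
have e2 : bf y BF y = dt y x by rewrite bdt hy.
have h1 : 0 <= bf y (BF - CF KA (1%:M - KA) (PA + QA) (PB + QB) P) y := hL y.
rewrite bAB in h1.
have h2 := @CFge _ _ PA PB QA QB P KA y hPA hPB hQA hQB hAS.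
have hw : Cs *m (invmx Cs *m x) = x by rewrite mulKVmx //; apply: spd_unit.
have h3 := @CS _ _ Cs x (invmx Cs *m x) y (spd_sym hCs) (fun u => spd_ge0 u hCs) hw.
have e3 : bf (invmx Cs *m x) Cs (invmx Cs *m x) = dt (invmx Cs *m x) x by rewrite bdt hw.
have e4 : dt (invmx Cs *m x) x = bf x (invmx Cs) x by rewrite dtC bdt.
rewrite e3 e4 in h3.
lra.
Qed.
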